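(* If $G$ is an infinite, countable, locally finite group, then the number of ends of $G$ is infinite.
   Context: A group is locally finite if every finite subset is contained in a finite subgroup. For a countable group $G$ equipped with a proper left-invariant metric, the number of ends of $G$ is the cardinality of $CF(G)\setminus G$, where $CF(X)$, for a proper metric space $X$, is the compactification induced by all continuous glacially oscillating functions $X\to[0,1]$. A glacial scale on $X$ is a sequence $\mathcal S=\{(K_i,n_i)\}_{i\ge1}$, $K_i$ bounded, $n_i\in\mathbb N$, such that for every bounded $K$ and $r>0$ there is $i$ with $K\subset K_i$, $n_i>r$; an $\mathcal S$-chain is a finite sequence $x_1,\dots,x_n$ with, for each $i\le n-1$, some $m$ with $x_i,x_{i+1}\notin K_m$ and $d(x_i,x_{i+1})\le n_m$; $f$ is glacially oscillating if for every $\epsilon>0$ there is a glacial scale $\mathcal S$ with $|f(x_1)-f(x_n)|<\epsilon$ for all $\mathcal S$-chains. *)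

(* Defs.v *)
From Stdlib Require Import Reals List.
Open Scope R_scope.

Definition finite_set {T : Type} (A : T -> Prop) : Prop :=
  exists l : list T, forall x, A x -> In x l.
Definition infinite_set {T : Type} (A : T -> Prop) : Prop := ~ finite_set A.

Definition countable_type (T : Type) : Prop :=
  exists f : T -> nat, forall x y, f x = f y -> x = y.

Definition is_group {G : Type} (mul : G -> G -> G) (one : G) (inv : G -> G) : Prop :=
  (forall x y z, mul x (mul y z) = mul (mul x y) z) /\
  (forall x, mul one x = x) /\ (forall x, mul x one = x) /\
  (forall x, mul (inv x) x = one) /\ (forall x, mul x (inv x) = one).

Definition is_subgroup {G : Type} (mul : G -> G -> G) (one : G) (inv : G -> G)
  (H : G -> Prop) : Prop :=
  H one /\ (forall x y, H x -> H y -> H (mul x y)) /\ (forall x, H x -> H (inv x)).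

Definition locally_finite {G : Type} (mul : G -> G -> G) (one : G) (inv : G -> G) : Prop :=
  forall s : list G, exists H : G -> Prop,
    is_subgroup mul one inv H /\ finite_set H /\ (forall x, In x s -> H x).

Definition is_metric {X : Type} (d : X -> X -> R) : Prop :=
  (forall x y, 0 <= d x y) /\ (forall x y, d x y = 0 <-> x = y) /\
  (forall x y, d x y = d y x) /\ (forall x y z, d x z <= d x y + d y z).

Definition left_invariant {G : Type} (mul : G -> G -> G) (d : G -> G -> R) : Prop :=
  forall g x y, d (mul g x) (mul g y) = d x y.

(** Proper metric on a countable (discrete) group: closed balls are finite. *)
Definition proper_metric {X : Type} (d : X -> X -> R) : Prop :=
  forall x r, finite_set (fun y => d x y <= r).

Definition bounded {X : Type} (d : X -> X -> R) (K : X -> Prop) : Prop :=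
  exists x0 r, forall y, K y -> d x0 y <= r.

Definition glacial_scale {X : Type} (d : X -> X -> R)
  (K : nat -> X -> Prop) (n : nat -> nat) : Prop :=
  (forall i, bounded d (K i)) /\
  (forall (B : X -> Prop) (r : R), bounded d B -> r > 0 ->
     exists i, (forall y, B y -> K i y) /\ INR (n i) > r).

Definition scale_link {X : Type} (d : X -> X -> R)
  (K : nat -> X -> Prop) (n : nat -> nat) (a b : X) : Prop :=
  exists m, ~ K m a /\ ~ K m b /\ d a b <= INR (n m).

(** An S-chain x_0, ..., x_N (N+1 points). *)
Definition scale_chain {X : Type} (d : X -> X -> R)
  (K : nat -> X -> Prop) (n : nat -> nat) (N : nat) (x : nat -> X) : Prop :=
  forall i, (i < N)%nat -> scale_link d K n (x i) (x (S i)).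

Definition glacially_oscillating {X : Type} (d : X -> X -> R) (f : X -> R) : Prop :=
  forall eps, eps > 0 -> exists (K : nat -> X -> Prop) (n : nat -> nat),
    glacial_scale d K n /\
    forall N x, scale_chain d K n N x -> Rabs (f (x 0%nat) - f (x N)) < eps.

Definition metric_continuous {X : Type} (d : X -> X -> R) (f : X -> R) : Prop :=
  forall x eps, eps > 0 -> exists delta, delta > 0 /\
    forall y, d x y < delta -> Rabs (f x - f y) < eps.

Definition GOfun {X : Type} (d : X -> X -> R) : Type :=
  { f : X -> R | (forall x, 0 <= f x <= 1) /\ metric_continuous d f
                 /\ glacially_oscillating d f }.

(** CF(X) is the closure of the image of the evaluation map
    e : X -> [0,1]^F, e x = (f x)_{f in F}, in the product topology. *)
Definition CF_eval {X : Type} (d : X -> X -> R) (x : X) : GOfun d -> R :=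
  fun f => proj1_sig f x.

(** p lies in the product-topology closure of e(X): every basic open
    neighbourhood (finitely many coordinates, radius eps) meets e(X). *)
Definition in_CF {X : Type} (d : X -> X -> R) (p : GOfun d -> R) : Prop :=
  (forall f, 0 <= p f <= 1) /\
  forall (fs : list (GOfun d)) (eps : R), eps > 0 ->
    exists x : X, forall f, In f fs -> Rabs (p f - CF_eval d x f) < eps.

Definition CF_remainder {X : Type} (d : X -> X -> R) : (GOfun d -> R) -> Prop :=
  fun p => in_CF d p /\ forall x : X, p <> CF_eval d x.

Definition infinitely_many_ends {X : Type} (d : X -> X -> R) : Prop :=
  infinite_set (CF_remainder d).

(* Main.v *)
Require Import Defs.
From Stdlib Require Import Reals List.

Module UltraAux.
From mathcomp Require Import all_boot boolp classical_sets filter.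
Lemma ultra_exists (T : Type) (F : (T -> Prop) -> Prop) :
  F (fun _ => True) ->
  (forall A B, F A -> F B -> F (fun x => A x /\ B x)) ->
  (forall A B : T -> Prop, (forall x, A x -> B x) -> F A -> F B) ->
  ~ F (fun _ => False) ->
  exists U : (T -> Prop) -> Prop,
    (forall A, F A -> U A) /\
    (forall A B, U A -> U B -> U (fun x => A x /\ B x)) /\
    (forall A B : T -> Prop, (forall x, A x -> B x) -> U A -> U B) /\
    ~ U (fun _ => False) /\
    (forall A, U A \/ U (fun x => ~ A x)).
Proof.
move=> FT FI FS F0.
have PF : ProperFilter F.
  constructor.
  - by move=> h; apply: F0; apply: FS h => x.
  - constructor.
    + by apply: FS FT => x.
    + by move=> A B FA FB; apply: FS (FI _ _ FA FB) => x [].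
    + by move=> A B AB; apply: FS.
have [U [UU FU]] := ultraFilterLemma PF.
exists U; split; first exact: FU.
split. move=> A B UA UB; apply: (filterS (P := A `&` B)); [by move=> x [] | exact: filterI].
split; first by move=> A B AB; apply: filterS.
split; first by move=> h; apply: (filter_not_empty U); apply: filterS h => x.
move=> A; case: (in_ultra_setVsetC A UU) => h; [left|right] => //.
Qed.
End UltraAux.

From Stdlib Require Import Reals List Lia Lra Classical ClassicalEpsilon Cantor.
Open Scope R_scope.

Lemma pigeon (T : Type) (g : nat -> T) (l : list T) :
  (forall i j, g i = g j -> i = j) -> (forall i, In (g i) l) -> False.
Proof.
  intros Hinj Hin.
  assert (HN : NoDup (map g (seq 0 (S (length l))))).
  { apply NoDup_map_NoDup_ForallPairs.
    - intros a b _ _ H; apply Hinj; exact H.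
    - apply seq_NoDup. }
  assert (Hi : incl (map g (seq 0 (S (length l)))) l).
  { intros y Hy. apply in_map_iff in Hy. destruct Hy as [i [<- _]]. apply Hin. }
  pose proof (NoDup_incl_length HN Hi) as H.
  rewrite length_map, length_seq in H. lia.
Qed.

Definition isU {T : Type} (U : (T -> Prop) -> Prop) : Prop :=
  (forall A B, U A -> U B -> U (fun x => A x /\ B x)) /\
  (forall A B : T -> Prop, (forall x, A x -> B x) -> U A -> U B) /\
  ~ U (fun _ => False) /\
  (forall A, U A \/ U (fun x => ~ A x)).

Lemma U_full {T : Type} (U : (T -> Prop) -> Prop) : isU U -> U (fun _ => True).
Proof.
  intros [UI [US [U0 Uu]]].
  destruct (Uu (fun _ => False)) as [H|H]; [contradiction|].
  apply (US _ _ (fun _ _ => I) H).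
Qed.

Lemma U_ne {T : Type} (U : (T -> Prop) -> Prop) S : isU U -> U S -> exists y, S y.
Proof.
  intros [UI [US [U0 Uu]]] HS.
  destruct (classic (exists y, S y)) as [H|H]; auto.
  exfalso; apply U0. apply (US S); auto. intros x Hx; apply H; exists x; auto.
Qed.

Lemma ulim_ex {T : Type} (U : (T -> Prop) -> Prop) (hU : isU U) (f : T -> R) :
  (forall x, 0 <= f x <= 1) ->
  exists L, 0 <= L <= 1 /\ forall eps, eps > 0 -> U (fun y => Rabs (f y - L) < eps).
Proof.
  intros hf.
  pose proof (U_full U hU) as UT.
  destruct hU as [UI [US [U0 Uu]]].
  set (E := fun t => U (fun y => t <= f y)).
  assert (Hub : is_upper_bound E 1).
  { intros t Ht. destruct (Rle_dec t 1) as [h|h]; auto. exfalso; apply U0.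
    revert Ht; apply US; intros y Hy; pose proof (hf y); lra. }
  assert (HE0 : E 0).
  { apply (US _ _ (fun y _ => proj1 (hf y)) UT). }
  destruct (completeness E (ex_intro _ 1 Hub) (ex_intro _ 0 HE0)) as [m [Hm1 Hm2]].
  exists m. split; [split; [apply Hm1; exact HE0 | apply Hm2; exact Hub]|].
  intros eps Heps.
  assert (C1 : U (fun y => m - eps < f y)).
  { destruct (classic (U (fun y => m - eps < f y))) as [h|h]; auto.
    exfalso.
    assert (is_upper_bound E (m - eps)).
    { intros t Ht. destruct (Rle_dec t (m - eps)) as [h'|h']; auto.
      exfalso; apply h. revert Ht; apply US; intros y Hy; lra. }
    pose proof (Hm2 _ H). lra. }
  assert (C2 : U (fun y => f y < m + eps)).
  { destruct (Uu (fun y => m + eps / 2 <= f y)) as [h|h].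
    - pose proof (Hm1 _ h). lra.
    - revert h; apply US; intros y Hy; apply Rnot_le_lt in Hy; lra. }
  generalize (UI _ _ C1 C2); apply US; intros y Hy; destruct Hy; apply Rabs_def1; lra.
Qed.

Lemma ulim_const {T : Type} (U : (T -> Prop) -> Prop) (hU : isU U) (f : T -> R) S c L :
  U S -> (forall y, S y -> f y = c) ->
  (forall eps, eps > 0 -> U (fun y => Rabs (f y - L) < eps)) -> L = c.
Proof.
  intros HS Hc HL.
  destruct (Req_dec L c) as [h|h]; auto. exfalso.
  assert (Hp : Rabs (c - L) > 0) by (apply Rabs_pos_lt; lra).
  destruct hU as [UI R1].
  destruct (U_ne U _ (conj UI R1) (UI _ _ HS (HL _ Hp))) as [y [Sy Hy]].
  rewrite Hc in Hy; auto. lra.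
Qed.

Section Main.
Variables (G : Type) (mul : G -> G -> G) (one : G) (inv : G -> G).
Hypothesis Hgrp : is_group mul one inv.
Hypothesis Hinf : infinite_set (fun _ : G => True).
Hypothesis Hlf : locally_finite mul one inv.
Variable d : G -> G -> R.
Hypothesis Hmet : is_metric d.
Hypothesis Hlinv : left_invariant mul d.
Hypothesis Hprop : proper_metric d.

Lemma fold_nonneg l : 0 <= fold_right (fun y acc => d one y + acc) 0 l.
Proof.
  induction l; simpl; [lra|]. pose proof (proj1 Hmet one a); lra.
Qed.

Lemma fold_ge l y : In y l -> d one y <= fold_right (fun y acc => d one y + acc) 0 l.
Proof.
  induction l; simpl; [tauto|]. intros [<-|H].
  - pose proof (fold_nonneg l); lra.
  - pose proof (IHl H). pose proof (proj1 Hmet one a); lra.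
Qed.

Lemma finite_bounded K : finite_set K -> Defs.bounded d K.
Proof.
  intros [l Hl]. exists one, (fold_right (fun y acc => d one y + acc) 0 l).
  intros y Hy; apply fold_ge; auto.
Qed.

Lemma glacial_of (c : G) (K : nat -> G -> Prop) :
  (forall i, Defs.bounded d (K i)) -> (forall i y, d c y <= INR i -> K i y) ->
  glacial_scale d K (fun i => i).
Proof.
  intros Hb Hball. split; auto.
  intros B r [x0 [rho HB]] Hr.
  destruct Hmet as [Hpos [Hzero [Hsym Htri]]].
  destruct (INR_unbounded (Rmax (d c x0 + rho) r)) as [i Hi].
  exists i; split.
  - intros y By; apply Hball. pose proof (Htri c x0 y). pose proof (HB y By).
    pose proof (Rmax_l (d c x0 + rho) r). lra.
  - pose proof (Rmax_r (d c x0 + rho) r). lra.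
Qed.

Lemma sep_list x l : exists δ, δ > 0 /\ forall y, In y l -> y <> x -> δ <= d x y.
Proof.
  destruct Hmet as [Hpos [Hzero [Hsym Htri]]].
  induction l.
  - exists 1. split; [lra| intros y []].
  - destruct IHl as [δ [Hδ H]]. destruct (classic (a = x)) as [e|ne].
    + exists δ; split; auto; intros y [<-|Hy] Hne; [contradiction| auto].
    + assert (Hda : d x a > 0).
      { pose proof (Hpos x a). destruct (Req_dec (d x a) 0) as [h|h].
        - apply Hzero in h. congruence.
        - lra. }
      exists (Rmin δ (d x a)). split. apply Rmin_pos; lra.
      intros y [<-|Hy] Hne; [apply Rmin_r |].
      eapply Rle_trans; [apply Rmin_l| auto].
Qed.

Lemma all_continuous f : metric_continuous d f.
Proof.
  intros x eps Heps. destruct (Hprop x 1) as [l Hl].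
  destruct (sep_list x l) as [δ [Hδ H]].
  exists (Rmin δ 1). split. apply Rmin_pos; lra. intros y Hy.
  assert (y = x).
  { destruct (classic (y = x)) as [h|h]; auto. exfalso.
    assert (d x y <= 1) by (pose proof (Rmin_r δ 1); lra).
    specialize (H y (Hl y H0) h). pose proof (Rmin_l δ 1); lra. }
  subst. replace (f x - f x) with 0 by ring. rewrite Rabs_R0; lra.
Qed.

Lemma chain_const K n (f : G -> R) :
  (forall a b, scale_link d K n a b -> f a = f b) ->
  forall N x, scale_chain d K n N x -> f (x 0%nat) = f (x N).
Proof.
  intros Hl N. induction N; intros x Hc; auto.
  rewrite (IHN x). apply Hl; apply Hc; lia. intros i Hi; apply Hc; lia.
Qed.

Lemma GO_of (c : G) K (f : G -> R) :
  (forall i, Defs.bounded d (K i)) -> (forall i y, d c y <= INR i -> K i y) ->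
  (forall a b, scale_link d K (fun i => i) a b -> f a = f b) ->
  glacially_oscillating d f.
Proof.
  intros Hb Hball Hl eps Heps. exists K, (fun i => i). split.
  - apply (glacial_of c); auto.
  - intros N x Hc. rewrite (chain_const _ _ _ Hl N x Hc).
    replace (f (x N) - f (x N)) with 0 by ring. rewrite Rabs_R0; lra.
Qed.

Definition ind (P : G -> Prop) (y : G) : R :=
  if excluded_middle_informative (P y) then 1 else 0.

Lemma ind_bounds P y : 0 <= ind P y <= 1.
Proof. unfold ind; destruct excluded_middle_informative; lra. Qed.

Lemma single_GO x0 : glacially_oscillating d (ind (fun y => y = x0)).
Proof.
  apply (GO_of x0 (fun i y => d x0 y <= INR i)).
  - intros i. exists x0, (INR i). auto.
  - auto.
  - intros a b [m [Ha [Hb _]]].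
    assert (d x0 x0 = 0) by (apply (proj1 (proj2 Hmet)); auto).
    pose proof (pos_INR m).
    unfold ind; destruct excluded_middle_informative as [e|e];
      [subst; exfalso; apply Ha; lra|].
    destruct excluded_middle_informative as [e'|e']; auto.
    subst; exfalso; apply Hb; lra.
Qed.

Definition single_fun (x0 : G) : GOfun d :=
  exist _ (ind (fun y => y = x0))
    (conj (ind_bounds _) (conj (all_continuous _) (single_GO x0))).

Lemma step (k : nat) (P : G -> Prop) : exists H : G -> Prop, finite_set P ->
  is_subgroup mul one inv H /\ finite_set H /\ (forall y, P y -> H y) /\
  (forall y, d one y <= INR k -> H y) /\ exists z, H z /\ ~ P z.
Proof.
  destruct (classic (finite_set P)) as [[lp Hp]|Hn]; [|exists P; intro; contradiction].
  destruct (Hprop one (INR k)) as [lb Hb].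
  destruct (classic (exists z, ~ P z)) as [[z Hz]|Hno].
  2:{ exfalso; apply Hinf. exists lp. intros z _. apply Hp.
      apply NNPP. intro hz. apply Hno. exists z; auto. }
  destruct (Hlf (lp ++ lb ++ z :: nil)) as [H [Hs [Hf Hin]]].
  exists H. intros _. split; [auto|split; [auto|split; [|split]]].
  - intros y Py. apply Hin. apply in_or_app; left; apply Hp; auto.
  - intros y Hy. apply Hin. apply in_or_app; right; apply in_or_app; left; apply Hb; auto.
  - exists z. split; auto. apply Hin. apply in_or_app; right; apply in_or_app; right; left; auto.
Qed.

Definition nextH k P : G -> Prop := proj1_sig (constructive_indefinite_description _ (step k P)).

Lemma nextH_spec k P : finite_set P ->
  is_subgroup mul one inv (nextH k P) /\ finite_set (nextH k P) /\ (forall y, P y -> nextH k P y) /\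
  (forall y, d one y <= INR k -> nextH k P y) /\ exists z, nextH k P z /\ ~ P z.
Proof. exact (proj2_sig (constructive_indefinite_description _ (step k P))). Qed.

Fixpoint Hs (j : nat) : G -> Prop :=
  match j with 0%nat => nextH 0 (fun _ => False) | S j' => nextH (S j') (Hs j') end.

Lemma Hs_fin j : finite_set (Hs j).
Proof.
  induction j; simpl.
  - apply nextH_spec. exists nil; tauto.
  - apply nextH_spec; auto.
Qed.

Lemma Hs_spec j : is_subgroup mul one inv (Hs j) /\ (forall y, d one y <= INR j -> Hs j y).
Proof.
  destruct j; simpl.
  - assert (h : finite_set (fun _ : G => False)) by (exists nil; tauto).
    pose proof (nextH_spec 0 _ h); tauto.
  - pose proof (nextH_spec (S j) _ (Hs_fin j)); tauto.
Qed.

Lemma Hs_succ j : (forall y, Hs j y -> Hs (S j) y) /\ exists z, Hs (S j) z /\ ~ Hs j z.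
Proof. simpl. pose proof (nextH_spec (S j) _ (Hs_fin j)); tauto. Qed.

Lemma Hs_mono a b : (a <= b)%nat -> forall y, Hs a y -> Hs b y.
Proof.
  intros h. induction h; auto. intros y Hy. apply Hs_succ; auto.
Qed.

Definition L j x := Hs (S j) x /\ ~ Hs j x.

Lemma L_uniq j j' x : L j x -> L j' x -> j = j'.
Proof.
  intros [a1 a2] [b1 b2].
  destruct (Nat.lt_trichotomy j j') as [h|[h|h]]; auto; exfalso.
  - apply b2. apply (Hs_mono (S j)); auto.
  - apply a2. apply (Hs_mono (S j')); auto.
Qed.

Lemma link_layer m x y j : ~ Hs m x -> d x y <= INR m -> L j x -> L j y.
Proof.
  intros Hx Hd [L1 L2].
  destruct Hgrp as [assoc [lid [rid [linv rinv]]]].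
  set (h := mul (inv x) y).
  assert (Ey : mul x h = y).
  { unfold h. rewrite assoc, rinv, lid. auto. }
  assert (Dh : d one h = d x y).
  { rewrite <- (Hlinv x one h). rewrite rid, Ey. auto. }
  assert (Hh : Hs m h) by (apply Hs_spec; lra).
  assert (Hmj : (m <= j)%nat).
  { destruct (Nat.le_gt_cases m j) as [l|l]; auto. exfalso; apply Hx.
    apply (Hs_mono (S j)); auto. }
  destruct (Hs_spec j) as [[S1 [S2 S3]] _].
  destruct (Hs_spec (S j)) as [[T1 [T2 T3]] _].
  assert (Hhj : Hs j h) by (apply (Hs_mono m); auto).
  split.
  - rewrite <- Ey. apply T2; auto. apply Hs_succ; auto.
  - intro Hyj. apply L2.
    assert (Ex : mul y (inv h) = x).
    { rewrite <- Ey, <- assoc, rinv, rid. auto. }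
    rewrite <- Ex. apply S2; auto.
Qed.

Definition A k x := exists j, L j x /\ fst (of_nat j) = k.

Lemma A_link k a b : scale_link d Hs (fun i => i) a b -> (A k a <-> A k b).
Proof.
  intros [m [Ha [Hb Hd]]].
  destruct Hmet as [Hpos [Hzero [Hsym Htri]]].
  split; intros [j [Lj Fj]]; exists j; split; auto.
  - apply (link_layer m a b); auto.
  - apply (link_layer m b a); auto. rewrite Hsym; auto.
Qed.

Lemma A_GO k : glacially_oscillating d (ind (A k)).
Proof.
  apply (GO_of one Hs).
  - intros i; apply finite_bounded, Hs_fin.
  - intros i y; apply Hs_spec.
  - intros a b Hl. pose proof (A_link k a b Hl) as [h1 h2]. unfold ind.
    destruct excluded_middle_informative as [e|e];
    destruct excluded_middle_informative as [e'|e']; auto; exfalso; tauto.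
Qed.

Definition A_fun (k : nat) : GOfun d :=
  exist _ (ind (A k)) (conj (ind_bounds _) (conj (all_continuous _) (A_GO k))).

Lemma A_disj k l y : A k y -> A l y -> k = l.
Proof.
  intros [j [Lj Fj]] [j' [Lj' Fj']]. rewrite (L_uniq _ _ _ Lj Lj') in Fj. congruence.
Qed.

Lemma L_ne j : exists z, L j z.
Proof. destruct (Hs_succ j) as [_ [z Hz]]. exists z; exact Hz. Qed.

Definition gA k t : G := proj1_sig (constructive_indefinite_description _ (L_ne (to_nat (k, t)))).

Lemma gA_spec k t : A k (gA k t).
Proof.
  exists (to_nat (k, t)). split.
  - exact (proj2_sig (constructive_indefinite_description _ (L_ne (to_nat (k, t))))).
  - rewrite cancel_of_to; auto.
Qed.

Lemma gA_inj k t t' : gA k t = gA k t' -> t = t'.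
Proof.
  intros E.
  pose proof (proj2_sig (constructive_indefinite_description _ (L_ne (to_nat (k, t))))) as H1.
  pose proof (proj2_sig (constructive_indefinite_description _ (L_ne (to_nat (k, t'))))) as H2.
  fold (gA k t) in H1. fold (gA k t') in H2. rewrite E in H1.
  pose proof (L_uniq _ _ _ H1 H2) as E2.
  apply (f_equal of_nat) in E2. rewrite !cancel_of_to in E2. congruence.
Qed.

Definition FA k (S : G -> Prop) : Prop :=
  exists l : list G, forall y, A k y -> ~ In y l -> S y.

Lemma UA_ex k : exists U, (forall A0, FA k A0 -> U A0) /\ isU U.
Proof.
  destruct (UltraAux.ultra_exists G (FA k)) as [U [H1 H2]].
  - exists nil; auto.
  - intros S1 S2 [l1 h1] [l2 h2]. exists (l1 ++ l2). intros y Ay Hn.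
    split; [apply h1|apply h2]; auto; intro; apply Hn; apply in_or_app; auto.
  - intros S1 S2 h [l hl]. exists l; auto.
  - intros [l hl]. apply (pigeon _ (gA k) l).
    + apply gA_inj.
    + intros t. apply NNPP. intro hn. apply (hl _ (gA_spec k t) hn).
  - exists U; split; auto.
Qed.

Definition Uk k := proj1_sig (constructive_indefinite_description _ (UA_ex k)).
Lemma Uk_spec k : (forall A0, FA k A0 -> Uk k A0) /\ isU (Uk k).
Proof. exact (proj2_sig (constructive_indefinite_description _ (UA_ex k))). Qed.

Definition pk (k : nat) (f : GOfun d) : R :=
  proj1_sig (constructive_indefinite_description _
     (ulim_ex (Uk k) (proj2 (Uk_spec k)) (proj1_sig f) (proj1 (proj2_sig f)))).

Lemma pk_spec k f : 0 <= pk k f <= 1 /\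
  forall eps, eps > 0 -> Uk k (fun y => Rabs (proj1_sig f y - pk k f) < eps).
Proof.
  exact (proj2_sig (constructive_indefinite_description _
     (ulim_ex (Uk k) (proj2 (Uk_spec k)) (proj1_sig f) (proj1 (proj2_sig f))))).
Qed.

Lemma pk_rem k : CF_remainder d (pk k).
Proof.
  destruct (Uk_spec k) as [HF hU].
  split.
  - split. intros f; apply pk_spec.
    intros fs eps Heps.
    assert (Hall : Uk k (fun y => forall f, In f fs -> Rabs (proj1_sig f y - pk k f) < eps)).
    { pose proof hU as hU'. destruct hU' as [UI [US _]]. induction fs as [|f0 fs IH].
      - generalize (U_full _ hU); apply US. intros y _ f h; destruct h.
      - generalize (UI _ _ IH (proj2 (pk_spec k f0) eps Heps)); apply US.
        intros y [Hy1 Hy2] f [e|h]; [subst; exact Hy2| apply Hy1; exact h]. }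
    destruct (U_ne _ _ hU Hall) as [x Hx]. exists x. intros f Hf.
    unfold CF_eval. rewrite Rabs_minus_sym. auto.
  - intros x E.
    assert (E1 : pk k (single_fun x) = 1).
    { rewrite E. unfold CF_eval, single_fun; simpl. unfold ind.
      destruct excluded_middle_informative; tauto. }
    assert (E0 : pk k (single_fun x) = 0).
    { apply (ulim_const (Uk k) hU (proj1_sig (single_fun x)) (fun y => y <> x)).
      - apply HF. exists (x :: nil). intros y _ hn e. apply hn; left; auto.
      - intros y hy. simpl; unfold ind. destruct excluded_middle_informative; tauto.
      - apply pk_spec. }
    lra.
Qed.

Lemma pk_A k l : pk k (A_fun l) = if excluded_middle_informative (k = l) then 1 else 0.
Proof.
  destruct (Uk_spec k) as [HF hU].
  assert (HA : Uk k (A k)) by (apply HF; exists nil; auto).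
  destruct excluded_middle_informative as [e|e].
  - apply (ulim_const (Uk k) hU (proj1_sig (A_fun l)) (A k)); auto.
    + intros y hy; simpl; unfold ind. subst. destruct excluded_middle_informative; tauto.
    + apply pk_spec.
  - apply (ulim_const (Uk k) hU (proj1_sig (A_fun l)) (A k)); auto.
    + intros y hy; simpl; unfold ind. destruct excluded_middle_informative as [a|a]; auto.
      exfalso; apply e; apply (A_disj k l y); auto.
    + apply pk_spec.
Qed.

Lemma main_ends : infinitely_many_ends d.
Proof.
  intros [l Hl]. apply (pigeon _ pk l).
  - intros i j E. pose proof (f_equal (fun p => p (A_fun i)) E) as E'. simpl in E'.
    rewrite !pk_A in E'.
    destruct excluded_middle_informative as [a|a]; [|tauto].
    destruct excluded_middle_informative as [b|b]; auto. lra.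
  - intros k; apply Hl, pk_rem.
Qed.

End Main.

Theorem proposition5p6 (G : Type) (mul : G -> G -> G) (one : G) (inv : G -> G)
  (Hgrp : is_group mul one inv)
  (Hcount : countable_type G)
  (Hinf : infinite_set (fun _ : G => True))
  (Hlf : locally_finite mul one inv)
  (d : G -> G -> R)
  (Hmet : is_metric d) (Hlinv : left_invariant mul d) (Hprop : proper_metric d) :
  infinitely_many_ends d.
Proof.
  exact (main_ends G mul one inv Hgrp Hinf Hlf d Hmet Hlinv Hprop).
Qed.
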